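(* The $(2+1)$ elitist black-box complexity of $\textsc{OneMax}$, both in the Las Vegas and in the Monte Carlo sense, is at most $n+1$.
   Context: For $z\in\{0,1\}^n$, $\textsc{Om}_z:\{0,1\}^n\to\mathbb{R}$, $\textsc{Om}_z(x)=n-\sum_{i=1}^n (x_i\oplus z_i)$ (number of positions where $x$ and $z$ agree); $\textsc{OneMax}=\{\textsc{Om}_z : z\in\{0,1\}^n\}$. A $(\mu+\lambda)$ elitist black-box algorithm (here $\mu=2,\lambda=1$) maintains a multiset $X$ of $\mu$ search points, initially sampled one by one with each distribution depending only on previous points and the ranking of their fitness values; in each generation it samples $\lambda$ offspring from a distribution depending only on $X$ and the ranking (weak ordering) of the fitness values of $X$ (not the values themselves), learns the ranking of all $\mu+\lambda$ points, and must keep $\mu$ points of highest fitness (ties broken arbitrarily). Runtime: number of sampled search points until an optimum is sampled for the first time. Las Vegas complexity: min over algorithms of max over functions in the class of expected runtime; $p$-Monte Carlo complexity: min over algorithms of the smallest $T$ such that on every function of the class the optimum is sampled within $T$ evaluations with probability at least $1-p$ (unspecified $p$: every constant $p\in(0,1)$). *)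

(* Defs.v *)
From HB Require Import structures.
From mathcomp Require Import all_boot all_order all_algebra.
From mathcomp Require Import boolp classical_sets reals ereal sequences.
Set Implicit Arguments. Unset Strict Implicit. Unset Printing Implicit Defensive.
Import Order.TTheory GRing.Theory Num.Theory.
Local Open Scope ring_scope.

Definition bs (n : nat) := {ffun 'I_n -> bool}.

Definition Om (n : nat) (z x : bs n) : nat := (n - \sum_(i < n) (x i (+) z i))%N.

Definition is_opt (n : nat) (f : bs n -> nat) (x : bs n) : bool :=
  [forall y, f y <= f x]%N.

(* Ranking (weak ordering) of the fitness values of k points:
   entry (i,j) tells whether f(x_i) <= f(x_j). *)
Definition rank (k : nat) := {ffun 'I_k * 'I_k -> bool}.
Definition ranking (n k : nat) (f : bs n -> nat) (xs : 'I_k -> bs n) : rank k :=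
  [ffun p : 'I_k * 'I_k => (f (xs p.1) <= f (xs p.2))%N].

Definition pop2 (n : nat) (x1 x2 : bs n) : 'I_2 -> bs n := tnth [tuple x1; x2].
Definition pop3 (n : nat) (x1 x2 y : bs n) : 'I_3 -> bs n := tnth [tuple x1; x2; y].

Definition sw2 (i : 'I_2) : 'I_2 := if val i == 0%N then inord 1 else inord 0.
Definition sw3 (i : 'I_3) : 'I_3 :=
  match val i with 0 => inord 1 | 1 => inord 0 | _ => i end.
Definition rswap2 (r : rank 2) : rank 2 := [ffun p => r (sw2 p.1, sw2 p.2)].
Definition rswap3 (r : rank 3) : rank 3 := [ffun p => r (sw3 p.1, sw3 p.2)].

Definition is_distr (R : realType) (T : finType) (d : T -> R) : Prop :=
  (forall x, 0 <= d x) /\ \sum_x d x = 1.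

(* A (2+1) black-box algorithm, given by its sampling/selection kernels.
   - init1 : distribution of the first search point;
   - init2 x1 : distribution of the second point given the first one;
   - off x1 x2 r : offspring distribution, given the population {x1,x2}
     and the ranking r of their fitness values;
   - sel x1 x2 y r i : probability of discarding point i of (x1,x2,y),
     given the ranking r of all three fitness values. *)
Record alg21 (R : realType) (n : nat) := Alg21 {
  a_init1 : bs n -> R;
  a_init2 : bs n -> bs n -> R;
  a_off : bs n -> bs n -> rank 2 -> bs n -> R;
  a_sel : bs n -> bs n -> bs n -> rank 3 -> 'I_3 -> R
}.

(* Validity as a (2+1) elitist black-box algorithm: the kernels are
   probability distributions, they depend on the population only as a
   multiset (symmetry under swapping the two parents, with the ranking
   permuted accordingly), and selection only discards a point of lowest
   fitness. *)
Definition elitist21 (R : realType) (n : nat) (A : alg21 R n) : Prop :=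
  [/\ is_distr (a_init1 A),
      (forall x1, is_distr (a_init2 A x1)),
      (forall x1 x2 r, is_distr (a_off A x1 x2 r)) &
      (forall x1 x2 y r, is_distr (a_sel A x1 x2 y r))] /\
  (forall x1 x2 r y, a_off A x1 x2 r y = a_off A x2 x1 (rswap2 r) y) /\
  (forall x1 x2 y r i, a_sel A x1 x2 y r i = a_sel A x2 x1 y (rswap3 r) (sw3 i)) /\
  (forall (f : bs n -> nat) x1 x2 y i,
        0 < a_sel A x1 x2 y (ranking f (pop3 x1 x2 y)) i ->
        forall j, (f (pop3 x1 x2 y i) <= f (pop3 x1 x2 y j))%N).

Definition keep (n : nat) (x1 x2 y : bs n) (i : 'I_3) : bs n * bs n :=
  match val i with 0 => (x2, y) | 1 => (x1, y) | _ => (x1, x2) end.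

(* surv A f t x1 x2 = probability that after the initialization and t
   generations no optimum has been sampled and the population is (x1,x2). *)
Fixpoint surv (R : realType) (n : nat) (A : alg21 R n) (f : bs n -> nat)
  (t : nat) (x1' x2' : bs n) : R :=
  match t with
  | 0 => a_init1 A x1' * a_init2 A x1' x2' * (~~ is_opt f x1' && ~~ is_opt f x2')%:R
  | t.+1 => \sum_(x1 : bs n) \sum_(x2 : bs n) \sum_(y : bs n) \sum_(i < 3)
      surv A f t x1 x2 * a_off A x1 x2 (ranking f (pop2 x1 x2)) y
      * (~~ is_opt f y)%:R * a_sel A x1 x2 y (ranking f (pop3 x1 x2 y)) i
      * (keep x1 x2 y i == (x1', x2'))%:R
  end.

(* tailP A f k = P(T > k), where T is the runtime (index of the first
   sampled optimum; evaluations 1,2 are the initial points, evaluation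
   t+2 is the offspring of generation t). *)
Definition tailP (R : realType) (n : nat) (A : alg21 R n) (f : bs n -> nat) (k : nat) : R :=
  match k with
  | 0 => 1
  | 1 => \sum_(x : bs n) a_init1 A x * (~~ is_opt f x)%:R
  | t.+2 => \sum_(x1 : bs n) \sum_(x2 : bs n) surv A f t x1 x2
  end.

(* E[T] = sum_{k >= 0} P(T > k)  (in the extended reals). *)
Definition expected_runtime (R : realType) (n : nat) (A : alg21 R n) (f : bs n -> nat) : \bar R :=
  (\sum_(0 <= k <oo) (tailP A f k)%:E)%E.

(* Main.v *)
Require Import Defs.
From HB Require Import structures.
From mathcomp Require Import all_boot all_order all_algebra.
From mathcomp Require Import boolp classical_sets reals ereal sequences.
From mathcomp Require Import zify lra.
Import Order.TTheory GRing.Theory Num.Theory.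
Set Implicit Arguments. Unset Strict Implicit. Unset Printing Implicit Defensive.
Local Open Scope ring_scope.

Section S.
Variable R : realType.
Variable n : nat.

Definition i20 : 'I_2 := inord 0.
Definition i21 : 'I_2 := inord 1.
Definition i30 : 'I_3 := inord 0.
Definition i31 : 'I_3 := inord 1.
Definition i32 : 'I_3 := inord 2.

Lemma sw2_0 : sw2 i20 = i21. Proof. by rewrite /sw2 /i20 /= inordK. Qed.
Lemma sw2_1 : sw2 i21 = i20. Proof. by rewrite /sw2 /i21 /= inordK. Qed.
Lemma sw3_0 : sw3 i30 = i31. Proof. by rewrite /sw3 /i30 /= inordK. Qed.
Lemma sw3_1 : sw3 i31 = i30. Proof. by rewrite /sw3 /i31 /= inordK. Qed.
Lemma sw3_2 : sw3 i32 = i32. Proof. by rewrite /sw3 /i32 /= inordK. Qed.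
Lemma I3_cases (i : 'I_3) : [\/ i = i30, i = i31 | i = i32].
Proof.
case: i => [[|[|[|k]]] Hi].
- by constructor 1; apply/val_inj; rewrite /= inordK.
- by constructor 2; apply/val_inj; rewrite /= inordK.
- by constructor 3; apply/val_inj; rewrite /= inordK.
- by [].
Qed.
Lemma i3_neq : [/\ i30 != i31, i30 != i32 & i31 != i32].
Proof. by rewrite /i30 /i31 /i32; split; apply/eqP => /(congr1 val); rewrite /= !inordK. Qed.
Lemma pop3_0 (x1 x2 y : bs n) : pop3 x1 x2 y i30 = x1.
Proof. by rewrite /pop3 (tnth_nth x1) /= inordK. Qed.
Lemma pop3_1 (x1 x2 y : bs n) : pop3 x1 x2 y i31 = x2.
Proof. by rewrite /pop3 (tnth_nth x1) /= inordK. Qed.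
Lemma pop3_2 (x1 x2 y : bs n) : pop3 x1 x2 y i32 = y.
Proof. by rewrite /pop3 (tnth_nth x1) /= inordK. Qed.
Lemma pop2_0 (x1 x2 : bs n) : pop2 x1 x2 i20 = x1.
Proof. by rewrite /pop2 (tnth_nth x1) /= inordK. Qed.
Lemma pop2_1 (x1 x2 : bs n) : pop2 x1 x2 i21 = x2.
Proof. by rewrite /pop2 (tnth_nth x1) /= inordK. Qed.
Lemma keep_0 (x1 x2 y : bs n) : keep x1 x2 y i30 = (x2, y).
Proof. by rewrite /keep /= inordK. Qed.
Lemma keep_1 (x1 x2 y : bs n) : keep x1 x2 y i31 = (x1, y).
Proof. by rewrite /keep /= inordK. Qed.

Lemma e01 : (i30 == i31) = false. Proof. by case: i3_neq => /negbTE. Qed.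
Lemma e02 : (i30 == i32) = false. Proof. by case: i3_neq => _ /negbTE. Qed.
Lemma e12 : (i31 == i32) = false. Proof. by case: i3_neq => _ _ /negbTE. Qed.
Lemma e10 : (i31 == i30) = false. Proof. by rewrite eq_sym e01. Qed.
Lemma e20 : (i32 == i30) = false. Proof. by rewrite eq_sym e02. Qed.
Lemma e21 : (i32 == i31) = false. Proof. by rewrite eq_sym e12. Qed.
Definition e3 := (e01, e02, e12, e10, e20, e21).

Definition flipn (k : nat) (x : bs n) : bs n := [ffun i => if nat_of_ord i == k then ~~ x i else x i].
Definition zero : bs n := [ffun _ => false].
Definition dif (x1 x2 : bs n) : nat := (\sum_(i < n | x1 i != x2 i) nat_of_ord i)%N.
Definition gb (x1 x2 : bs n) (r : rank 2) : bs n :=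
  if r (i20,i21) && ~~ r (i21,i20) then x2
  else if r (i21,i20) && ~~ r (i20,i21) then x1 else [ffun i => x1 i && x2 i].
Definition goff x1 x2 r := flipn (dif x1 x2).+1 (gb x1 x2 r).
Definition selw (r : rank 3) (i : 'I_3) : R :=
  let m0 := r (i30,i31) && r (i30,i32) in let m1 := r (i31,i30) && r (i31,i32) in
  if m0 && ~~ m1 then (i == i30)%:R else if m1 && ~~ m0 then (i == i31)%:R
  else if m0 && m1 then (i != i32)%:R / 2 else (i == i32)%:R.
Definition Alg : alg21 R n := Alg21 (fun x => (x == zero)%:R) (fun x1 x2 => (x2 == flipn 0 x1)%:R)
  (fun x1 x2 r y => (y == goff x1 x2 r)%:R) (fun _ _ _ r i => selw r i).

Lemma sum_eq1 (T : finType) (a : T) : \sum_x (x == a)%:R = 1 :> R.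
Proof. by rewrite (bigD1 a) //= eqxx big1 ?addr0 // => x /negbTE ->. Qed.

Lemma neq32 (i : 'I_3) : (i != i32)%:R = (i == i30)%:R + (i == i31)%:R :> R.
Proof. by case: (I3_cases i) => ->; rewrite ?e3 eqxx /= ?addr0 ?add0r. Qed.

Lemma selw_distr r : is_distr (selw r).
Proof.
split.
- move=> i; rewrite /selw; case: ifP => _; first exact: ler0n.
  case: ifP => _; first exact: ler0n.
  case: ifP => _; last exact: ler0n.
  by apply: divr_ge0; [exact: ler0n|].
- rewrite /selw; case: (r (i30,i31)); case: (r (i30,i32)); case: (r (i31,i30));
  case: (r (i31,i32)); rewrite /= ?sum_eq1 //.
  rewrite -mulr_suml (eq_bigr _ (fun i _ => neq32 i)) big_split /= !sum_eq1.
  by rewrite divff // pnatr_eq0.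
Qed.

Lemma dif_sym x1 x2 : dif x1 x2 = dif x2 x1.
Proof. by apply: eq_bigl => i; rewrite eq_sym. Qed.

Lemma goff_sym x1 x2 r : goff x2 x1 (rswap2 r) = goff x1 x2 r.
Proof.
rewrite /goff dif_sym; congr flipn.
rewrite /gb !ffunE /= sw2_0 sw2_1.
case: (r (i20,i21)); case: (r (i21,i20)) => //=.
all: by apply/ffunP => i; rewrite !ffunE andbC.
Qed.

Lemma selw_sym r i : selw r i = selw (rswap3 r) (sw3 i).
Proof.
rewrite /selw !ffunE /= sw3_0 sw3_1 sw3_2.
case: (I3_cases i) => ->; rewrite ?sw3_0 ?sw3_1 ?sw3_2;
rewrite ?e3 ?eqxx;
case: (r (i30,i31)); case: (r (i30,i32)); case: (r (i31,i30)); case: (r (i31,i32)) => //=.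
Qed.

Lemma selw_el (f : bs n -> nat) x1 x2 y i :
  0 < selw (ranking f (pop3 x1 x2 y)) i -> forall j, (f (pop3 x1 x2 y i) <= f (pop3 x1 x2 y j))%N.
Proof.
rewrite /selw !ffunE /= !pop3_0 !pop3_1 !pop3_2 => H j.
case: (I3_cases j) => ->; case: (I3_cases i) => Ei; rewrite Ei ?pop3_0 ?pop3_1 ?pop3_2 // in H *;
move: H; rewrite ?e3 ?eqxx;
case H1: (f x1 <= f x2)%N; case H2: (f x1 <= f y)%N; case H3: (f x2 <= f x1)%N; case H4: (f x2 <= f y)%N;
  rewrite /= ?ltxx ?ltr01 // ?mul0r ?ltxx //; lia.
Qed.

Lemma Alg_el : elitist21 Alg.
Proof.
split; [split|split; [|split]].
- by split; [move=> x; exact: ler0n| exact: sum_eq1].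
- by move=> x1; split; [move=> x; exact: ler0n| exact: sum_eq1].
- by move=> x1 x2 r; split; [move=> x; exact: ler0n| exact: sum_eq1].
- move=> *; exact: selw_distr.
- by move=> x1 x2 r y /=; rewrite goff_sym.
- by move=> x1 x2 y r i /=; rewrite -selw_sym.
- move=> f x1 x2 y i /=; exact: selw_el.
Qed.

Lemma sum_only (T : finType) (F : T -> R) a :
  (forall x, x != a -> F x = 0) -> \sum_x F x = F a.
Proof. by move=> H; rewrite (bigD1 a) //= big1 ?addr0 // => x /H. Qed.

Variable z : bs n.
Definition D (x : bs n) : nat := (\sum_(i < n) (x i (+) z i))%N.
Definition cz (t : nat) : bs n := [ffun i : 'I_n => (nat_of_ord i < t)%N && z i].

Lemma Om_D x : Om z x = (n - D x)%N. Proof. by []. Qed.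

Lemma D_le x : (D x <= n)%N.
Proof.
rewrite /D; apply: leq_trans (_ : (\sum_(i < n) 1 <= n)%N); last by rewrite sum_nat_const card_ord muln1.
by apply: leq_sum => i _; case: (_ (+) _).
Qed.

Lemma flipD (j : 'I_n) x :
  (D (flipn (nat_of_ord j) x) + (x j (+) z j) = D x + ~~ (x j (+) z j))%N.
Proof.
rewrite /D (bigD1 j) //= [X in (_ = X + _)%N](bigD1 j) //= ffunE eqxx.
rewrite (eq_bigr (fun i => nat_of_bool (x i (+) z i))); last first.
  move=> i Hij; rewrite ffunE.
  have -> : (nat_of_ord i == val j) = false by apply/negbTE.
  by [].
by case: (x j); case: (z j) => /=; lia.
Qed.

Lemma opt_z : is_opt (Om z) z.
Proof.
apply/forallP => y; rewrite !Om_D.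
have -> : D z = 0%N by rewrite /D big1 // => i _; rewrite addbb.
by rewrite subn0 leq_subr.
Qed.

Lemma cz_step t (Ht : (t < n)%N) :
  cz t.+1 = if z (Ordinal Ht) then flipn t (cz t) else cz t.
Proof.
apply/ffunP => i; rewrite !ffunE.
case: (ltngtP (nat_of_ord i) t) => Hi.
- have h1 : (nat_of_ord i < t.+1)%N by lia.
  have h2 : (nat_of_ord i == t) = false by lia.
  by rewrite h1; case: (z (Ordinal Ht)); rewrite ?ffunE ?h2 ?Hi.
- have h1 : (nat_of_ord i < t.+1)%N = false by lia.
  have h2 : (nat_of_ord i == t) = false by lia.
  have h3 : (nat_of_ord i < t)%N = false by lia.
  by rewrite h1; case: (z (Ordinal Ht)); rewrite ?ffunE ?h2 ?h3.
- have Ei : i = Ordinal Ht by apply/val_inj.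
  rewrite Hi ltnSn /= Ei.
  by case: (z (Ordinal Ht)); rewrite ?ffunE ?eqxx ?ltnn.
Qed.

Lemma cz_at t (Ht : (t < n)%N) : cz t (Ordinal Ht) = false.
Proof. by rewrite ffunE ltnn. Qed.

Lemma cz_n : cz n = z.
Proof. by apply/ffunP => i; rewrite ffunE ltn_ord. Qed.

Lemma dif_flip x t (Ht : (t < n)%N) : dif x (flipn t x) = t.
Proof.
rewrite /dif (big_pred1 (Ordinal Ht)) // => i /=.
rewrite ffunE.
have -> : (i == Ordinal Ht) = (nat_of_ord i == t) by [].
by case: (nat_of_ord i == t); rewrite ?eqxx //; case: (x i).
Qed.

Lemma goff_st t (Ht1 : (t.+1 < n)%N) :
  goff (cz t) (flipn t (cz t)) (ranking (Om z) (pop2 (cz t) (flipn t (cz t))))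
  = flipn t.+1 (cz t.+1).
Proof.
rewrite /goff (dif_flip _ (ltnW Ht1)); congr flipn.
have F1 := flipD (Ordinal (ltnW Ht1)) (cz t); rewrite cz_at /= in F1.
have G1 := D_le (cz t); have G2 := D_le (flipn t (cz t)).
rewrite (cz_step (ltnW Ht1)) /gb !ffunE /= pop2_0 pop2_1 !Om_D.
case: (z _) F1 => /= F1.
- have e1 : (n - D (cz t) <= n - D (flipn t (cz t)))%N = true by lia.
  have e2 : (n - D (flipn t (cz t)) <= n - D (cz t))%N = false by lia.
  by rewrite e1 e2.
- have e1 : (n - D (cz t) <= n - D (flipn t (cz t)))%N = false by lia.
  have e2 : (n - D (flipn t (cz t)) <= n - D (cz t))%N = true by lia.
  by rewrite e1 e2.
Qed.

Lemma sel_st t (Ht1 : (t.+1 < n)%N) i :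
  selw (ranking (Om z) (pop3 (cz t) (flipn t (cz t)) (flipn t.+1 (cz t.+1)))) i
  = (i == (if z (Ordinal (ltnW Ht1)) then i30 else i31))%:R.
Proof.
have F1 := flipD (Ordinal (ltnW Ht1)) (cz t); rewrite cz_at /= in F1.
have F2 := flipD (Ordinal Ht1) (cz t.+1); simpl in F2.
have F3 : (D (flipn t.+1 (cz t.+1)) <= D (cz t.+1) + 1)%N.
  by move: F2; case: (_ (+) _) => /=; lia.
have G1 := D_le (cz t); have G2 := D_le (flipn t (cz t)).
have G3 := D_le (flipn t.+1 (cz t.+1)).
rewrite /selw !ffunE /= !pop3_0 !pop3_1 !pop3_2 !Om_D.
move: F3 G3; rewrite (cz_step (ltnW Ht1)).
case: (z _) F1 => /= F1 F3 G3.
- have e1 : (n - D (cz t) <= n - D (flipn t (cz t)))%N = true by lia.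
  have e2 : (n - D (flipn t (cz t)) <= n - D (cz t))%N = false by lia.
  have e3 : (n - D (cz t) <= n - D (flipn t.+1 (flipn t (cz t))))%N = true by lia.
  by rewrite e1 e2 e3.
- have e1 : (n - D (cz t) <= n - D (flipn t (cz t)))%N = false by lia.
  have e2 : (n - D (flipn t (cz t)) <= n - D (cz t))%N = true by lia.
  have e3 : (n - D (flipn t (cz t)) <= n - D (flipn t.+1 (cz t)))%N = true by lia.
  by rewrite e1 e2 e3.
Qed.

Lemma cz0 : cz 0 = zero.
Proof. by apply/ffunP => i; rewrite !ffunE. Qed.

Lemma selw_ge0 r i : 0 <= selw r i.
Proof. by case: (selw_distr r) => H _; apply: H. Qed.

Lemma surv_ge0 t x1 x2 : 0 <= surv Alg (Om z) t x1 x2.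
Proof.
elim: t x1 x2 => [|t IH] x1 x2 /=; first by rewrite !mulr_ge0 ?ler0n.
do 4 (apply: sumr_ge0 => ? _).
by rewrite !mulr_ge0 ?ler0n ?IH ?selw_ge0.
Qed.

Lemma surv_le t : (t < n)%N -> forall x1' x2', surv Alg (Om z) t x1' x2' <=
  ((x1' == cz t) && (x2' == flipn t (cz t)) && ~~ is_opt (Om z) x1' && ~~ is_opt (Om z) x2')%:R.
Proof.
elim: t => [|t IH] Ht x1' x2' /=.
  rewrite cz0 -!natrM ler_nat.
  case: eqP => [->|]; case: eqP => [->|] //=; rewrite ?muln0 ?mul0n //.
  by case: (~~ _ && _).
have Ht0 := ltnW Ht.
set I := fun x1 x2 : bs n => ((x1 == cz t) && (x2 == flipn t (cz t)) && ~~ is_opt (Om z) x1 && ~~ is_opt (Om z) x2)%:R : R.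
apply: le_trans (_ : \sum_x1 \sum_x2 \sum_y \sum_(i < 3) (I x1 x2 *
   ((y == goff x1 x2 (ranking (Om z) (pop2 x1 x2)))%:R * ((~~ is_opt (Om z) y)%:R *
   (selw (ranking (Om z) (pop3 x1 x2 y)) i * (keep x1 x2 y i == (x1', x2'))%:R)))) <= _).
  do 4 (apply: ler_sum => ? _).
  rewrite -!mulrA; apply: ler_wpM2r; last exact: IH.
  by rewrite !mulr_ge0 ?ler0n ?selw_ge0.
rewrite (sum_only (a:=cz t)); last first.
  move=> x1 /negbTE H; do 3 (apply: big1 => ? _).
  by rewrite /I H /= mul0r.
rewrite (sum_only (a:=flipn t (cz t))); last first.
  move=> x2 /negbTE H; do 2 (apply: big1 => ? _).
  by rewrite /I H eqxx /= mul0r.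
rewrite (sum_only (a:=flipn t.+1 (cz t.+1))); last first.
  move=> y H; apply: big1 => ? _.
  rewrite (goff_st Ht); case: (y =P flipn t.+1 (cz t.+1)) => [E|_]; last by rewrite mul0r mulr0.
  by move: H; rewrite E eqxx.
rewrite (sum_only (a:=if z (Ordinal (ltnW Ht)) then i30 else i31)); last first.
  by move=> i /negbTE H; rewrite (sel_st Ht) H mul0r !mulr0.
rewrite (sel_st Ht) (goff_st Ht) !eqxx /I !eqxx /= !mul1r.
rewrite (cz_step (ltnW Ht)).
case: (z _); rewrite ?keep_0 ?keep_1 -!natrM ler_nat;
  (case: eqP => [[<- <-]|_]; last by rewrite !muln0);
  rewrite !eqxx /=;
  by case: (is_opt _ (cz t)); case: (is_opt _ (flipn t (cz t))); case: (is_opt _ (flipn _ _)).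
Qed.

Lemma all_opt : n = 0%N -> forall x, is_opt (Om z) x.
Proof. by move=> E x; apply/forallP => y; rewrite !Om_D E. Qed.

Lemma surv_last x1 x2 : surv Alg (Om z) n.-1 x1 x2 = 0.
Proof.
case: (posnP n) => Hn.
  have -> : n.-1 = 0%N by rewrite Hn.
  rewrite /= (all_opt Hn x1) /=.
  by rewrite mulr0.
apply/le_anti/andP; split; last exact: surv_ge0.
have Ht : (n.-1 < n)%N by rewrite prednK.
apply: le_trans (surv_le Ht x1 x2) _.
have E := cz_step Ht; rewrite prednK // cz_n in E.
move: E; case: (z _) => E.
- by rewrite -E; case: (x2 =P z) => [->|]; rewrite ?opt_z ?andbF ?andbT //= !andbF.
- by rewrite -E; case: (x1 =P z) => [->|]; rewrite ?opt_z //= ?andbF.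
Qed.

Lemma surv_zero t : (n.-1 <= t)%N -> forall x1 x2, surv Alg (Om z) t x1 x2 = 0.
Proof.
elim: t => [|t IH] Ht x1 x2.
  have E : n.-1 = 0%N by lia.
  by rewrite -{1}E surv_last.
case: (ltngtP n.-1 t.+1) => H; last by rewrite -H surv_last.
  rewrite /=; do 4 (apply: big1 => ? _).
  by rewrite IH ?mul0r //; lia.
lia.
Qed.

Lemma tail_ge0 k : 0 <= tailP Alg (Om z) k.
Proof.
case: k => [|[|t]] /=; first exact: ler01.
  by apply: sumr_ge0 => x _; rewrite mulr_ge0 ?ler0n.
by do 2 (apply: sumr_ge0 => ? _); apply: surv_ge0.
Qed.

Lemma tail_le k : tailP Alg (Om z) k <= (k <= n)%N%:R.
Proof.
case: k => [|[|t]] /=; first by [].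
  rewrite (sum_only (a:=zero)) ?eqxx ?mul1r; last by move=> x /negbTE ->; rewrite mul0r.
  case: (posnP n) => Hn.
    by rewrite (all_opt Hn).
  by rewrite ler_nat; case: (is_opt _ _) => //=; rewrite Hn.
case: (leqP t.+2 n) => H.
  apply: le_trans (_ : \sum_(x1 : bs n) \sum_(x2 : bs n)
     ((x1 == cz t) && (x2 == flipn t (cz t)))%:R <= _).
    do 2 (apply: ler_sum => ? _).
    apply: le_trans (surv_le _ _ _) _; first lia.
    by rewrite ler_nat; case: (_ == _); case: (_ == _); case: (is_opt _ _); case: (is_opt _ _).
  rewrite (sum_only (a:=cz t)); last first.
    by move=> x /negbTE Hx; apply: big1 => ? _; rewrite Hx.
  rewrite (sum_only (a:=flipn t (cz t))); last first.
    by move=> x /negbTE Hx; rewrite Hx andbF.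
  by rewrite !eqxx.
rewrite big1 ?ler0n // => x1 _; rewrite big1 // => x2 _.
by apply: surv_zero; lia.
Qed.
End S.

Unset Implicit Arguments.
Theorem theorem3 (R : realType) (n : nat) :
  (exists A : alg21 R n, elitist21 A /\
     forall z : bs n, (expected_runtime A (Om z) <= (n.+1)%:R%:E)%E)
  /\
  (forall p : R, 0 < p < 1 ->
     exists A : alg21 R n, elitist21 A /\
       forall z : bs n, 1 - p <= 1 - tailP A (Om z) n.+1).
Proof.
split.
  exists (Alg R n); split; first exact: Alg_el.
  move=> z; rewrite /expected_runtime.
  rewrite (nneseries_split 0 n.+1); last by move=> k _; rewrite lee_fin tail_ge0.
  rewrite eseries0 ?adde0; last first.
    move=> k Hk _; congr (_%:E); apply/le_anti/andP; split; last exact: tail_ge0.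
    apply: le_trans (tail_le _ _ _) _.
    have -> : (k <= n)%N = false by lia.
    by rewrite mulr0n.
  rewrite sumEFin lee_fin.
  apply: le_trans (_ : \sum_(0 <= k < 0 + n.+1) (1 : R) <= _).
    apply: ler_sum => k _; apply: le_trans (tail_le _ _ _) _.
    by case: leqP; rewrite ?mulr0n ?ler01.
  by rewrite sumr_const_nat subn0 add0n.
move=> p /andP[p0 p1]; exists (Alg R n); split; first exact: Alg_el.
move=> z.
have : tailP (Alg R n) (Om z) n.+1 <= 0.
  by apply: le_trans (tail_le _ _ _) _; rewrite ltnn mulr0n.
lra.
Qed.
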